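(* Let $k$ be an algebraically closed field of characteristic $0$, $G$ an algebraic torus and $V$ any finite-dimensional algebraic $G$-module. Then $\mathrm{pol\,ind}(V)=\infty$.
   Context: For $n\in\mathbb N$, $G$ acts diagonally on $V^{\oplus n}$. Polarizations of $f\in k[V]$: $f(\alpha_1v_1+\dots+\alpha_nv_n)=\sum_{(i_1,\dots,i_n)\in\mathbb Z_+^n}\alpha_1^{i_1}\cdots\alpha_n^{i_n}f_{i_1,\dots,i_n}(v_1,\dots,v_n)$; $\mathrm{pol}_nk[V]^G\subseteq k[V^{\oplus n}]^G$ is generated by polarizations of all $f\in k[V]^G$. $\mathcal N_{V^{\oplus n},G}=\{w:F(w)=F(0)\ \forall F\in k[V^{\oplus n}]^G\}$, $\mathcal P_{V^{\oplus n},G}=\{w:h(w)=h(0)\ \forall h\in\mathrm{pol}_nk[V]^G\}$. The polarization index $\mathrm{pol\,ind}(V)$ is the supremum of all $n\in\mathbb N$ with $\mathcal N_{V^{\oplus n},G}=\mathcal P_{V^{\oplus n},G}$. *)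

(* Defs.v *)
From HB Require Import structures.
From mathcomp Require Import all_boot all_order all_algebra.
From mathcomp Require Export mpoly.
Set Implicit Arguments. Unset Strict Implicit. Unset Printing Implicit Defensive.
Import GRing.Theory.
Local Open Scope ring_scope.

Section Defs.
Variable k : fieldType.

Definition in_torus (r : nat) (t : 'I_r -> k) : Prop := forall i, t i != 0.
Definition torus_one (r : nat) : 'I_r -> k := fun _ => 1.
Definition torus_mul (r : nat) (s t : 'I_r -> k) : 'I_r -> k := fun i => s i * t i.

(* A finite-dimensional algebraic (rational) G-module V = k^d : a group
   homomorphism rho : G -> GL_d(k) whose matrix entries are regular functions
   on the torus, i.e. elements of k[t_1^{+-1},...,t_r^{+-1}], written as
   P(t) / (t_1 ... t_r)^N. *)
Definition algebraic_torus_module (r d : nat) (rho : ('I_r -> k) -> 'M[k]_d) : Prop :=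
  [/\ rho (@torus_one r) = 1%:M,
      (forall s t, in_torus s -> in_torus t ->
         rho (torus_mul s t) = rho s *m rho t) &
      exists (N : nat) (P : 'I_d -> 'I_d -> {mpoly k[r]}),
        forall t, in_torus t -> forall a b,
          rho t a b = (P a b).@[t] / (\prod_(i < r) t i) ^+ N].

(* A point of V^{(+) n} is an n x d matrix w whose i-th row is v_i;
   G acts diagonally: g.w has rows rho(g) v_i, i.e. g.w = w *m (rho g)^T.
   k[V^{(+) n}] = {mpoly k[n * d]}, the coordinate of index
   mxvec_index i j being the j-th coordinate of v_i. *)
Definition evalVn (n d : nat) (F : {mpoly k[n * d]}) (w : 'M[k]_(n, d)) : k :=
  F.@[fun x => mxvec w 0 x].

Definition actVn (r n d : nat) (rho : ('I_r -> k) -> 'M[k]_d) (g : 'I_r -> k)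
  (w : 'M[k]_(n, d)) : 'M[k]_(n, d) := w *m (rho g)^T.

Definition invariant (r n d : nat) (rho : ('I_r -> k) -> 'M[k]_d)
  (F : {mpoly k[n * d]}) : Prop :=
  forall g, in_torus g -> forall w, evalVn F (actVn rho g w) = evalVn F w.

Definition invariantV (r d : nat) (rho : ('I_r -> k) -> 'M[k]_d)
  (f : {mpoly k[d]}) : Prop :=
  forall g, in_torus g -> forall v : 'cV[k]_d,
    f.@[fun x => (rho g *m v) x 0] = f.@[fun x => v x 0].

(* Polarization: substitute x_j |-> sum_i alpha_i * y_{i j} in f, where the
   alpha_i are the variables of the outer polynomial ring and y_{i j} the
   coordinates of V^{(+) n}; f_{m} is the coefficient of alpha^m. *)
Definition polar_subst (n d : nat) : d.-tuple {mpoly {mpoly k[n * d]}[n]} :=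
  [tuple \sum_(i < n) 'X_i * ('X_(mxvec_index i j))%:MP | j < d].

Definition polarization (n d : nat) (f : {mpoly k[d]}) (m : 'X_{1..n})
  : {mpoly k[n * d]} :=
  (map_mpoly (fun c : k => c%:MP_[n * d]) f \mPo polar_subst n d)@_m.

Definition pol_gen (r n d : nat) (rho : ('I_r -> k) -> 'M[k]_d)
  (F : {mpoly k[n * d]}) : Prop :=
  exists (f : {mpoly k[d]}) (m : 'X_{1..n}), invariantV rho f /\ F = polarization f m.

Definition subalg_gen (N : nat) (S : {mpoly k[N]} -> Prop) (F : {mpoly k[N]}) : Prop :=
  forall A : {mpoly k[N]} -> Prop,
    (forall G, S G -> A G) ->
    (forall c : k, A c%:MP) ->
    (forall G H, A G -> A H -> A (G + H)) ->
    (forall G H, A G -> A H -> A (G * H)) ->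
    A F.

Definition pol_alg (r n d : nat) (rho : ('I_r -> k) -> 'M[k]_d) :=
  subalg_gen (pol_gen rho (n:=n)).

Definition nullcone (r n d : nat) (rho : ('I_r -> k) -> 'M[k]_d) (w : 'M[k]_(n, d)) : Prop :=
  forall F, invariant rho F -> evalVn F w = evalVn F 0.

Definition polcone (r n d : nat) (rho : ('I_r -> k) -> 'M[k]_d) (w : 'M[k]_(n, d)) : Prop :=
  forall h, pol_alg rho h -> evalVn h w = evalVn h 0.

(* pol ind(V) = infinity: the set of n in N with N = P is unbounded. *)
Definition pol_ind_infinite (r d : nat) (rho : ('I_r -> k) -> 'M[k]_d) : Prop :=
  forall m : nat, exists n : nat, (m <= n)%N /\
    (forall w : 'M[k]_(n, d), nullcone rho w <-> polcone rho w).
End Defs.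

(* Main.v *)
Require Import Defs.
From mathcomp Require Import all_boot all_order all_algebra.
From mathcomp Require Import mpoly.
From Stdlib Require Import Classical.
From mathcomp Require Import ring zify.
Import GRing.Theory.
Local Open Scope ring_scope.

Section P1.
Set Implicit Arguments. Unset Strict Implicit.
Lemma split_base (B x y x' y' : nat) : (x < B)%N -> (x' < B)%N ->
  (x + B * y = x' + B * y')%N -> x = x' /\ y = y'.
Proof.
move=> hx hx' h.
have hB : (0 < B)%N by apply: leq_ltn_trans hx.
have e1 : x = x'.
  have := congr1 (modn^~ B) h; rewrite /= !(addnC x) !(addnC x') !(mulnC B).
  by rewrite !modnMDl !modn_small.
split=> //; have := congr1 (divn^~ B) h; rewrite /= !(addnC x) !(addnC x') !(mulnC B).
by rewrite !divnMDl // !divn_small // !addn0.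
Qed.

Lemma kron_inj B n (a b : 'I_n -> nat) : (forall i, a i < B)%N -> (forall i, b i < B)%N ->
  (\sum_i a i * B ^ i = \sum_i b i * B ^ i)%N -> forall i, a i = b i.
Proof.
elim: n a b => [|n IH] a b ha hb; first by move=> _ [].
rewrite !big_ord_recl /= !expn0 !muln1.
have e: forall c : 'I_n.+1 -> nat, (\sum_(i < n) c (lift ord0 i) * B ^ (lift ord0 i)
   = B * \sum_(i<n) c (lift ord0 i) * B ^ i)%N.
  move=> c; rewrite big_distrr /=; apply: eq_bigr => i _.
  by rewrite /= /bump /= add1n expnS mulnCA.
rewrite !e => /split_base [] // h0 hs i.
case: (unliftP ord0 i) => [j ->|-> //].
exact: (IH (fun j => a (lift ord0 j)) (fun j => b (lift ord0 j))).
Qed.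

Section Zero.
Variable k : fieldType.
Hypothesis hk : [pchar k] =i pred0.

Lemma natr_nz (j : nat) : (j.+1)%:R != 0 :> k.
Proof. by rewrite (proj1 (pcharf0P k) hk). Qed.

Lemma natr_inj_k : injective (fun j : nat => j%:R : k).
Proof.
move=> i j /= /eqP; wlog le_ij : i j / (j <= i)%N.
  move=> H; case: (leqP j i) => [/H//|/ltnW le].
  by rewrite eq_sym => /(H _ _ le) ->.
rewrite -subr_eq0 -natrB // (proj1 (pcharf0P k) hk) subn_eq0 => h.
by apply/eqP; rewrite eqn_leq h le_ij.
Qed.

Lemma mdeg_ge (n : nat) (m : 'X_{1..n}) i : (m i <= mdeg m)%N.
Proof. by rewrite mdegE (bigD1 i) //= leq_addr. Qed.

Lemma mpoly_torus_eq0 n (p : {mpoly k[n]}) :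
  (forall t : 'I_n -> k, (forall i, t i != 0) -> p.@[t] = 0) -> p = 0.
Proof.
move=> hp; set B := (msize p).+1.
have pE := mpolywE (leqnSn (msize p)); rewrite -/B in pE.
pose e (m : 'X_{1..n}) := (\sum_(i < n) m i * B ^ i)%N.
pose q : {poly k} := \sum_(m : 'X_{1..n < B}) p@_m *: 'X^(e m).
have qE s : q.[s] = p.@[fun i => s ^+ (B ^ i)].
  rewrite [in RHS]pE horner_sum raddf_sum; apply: eq_bigr => m _.
  rewrite hornerZ hornerXn.
  rewrite /= mevalZ mevalX; congr (_ * _).
  rewrite /e -prodrXr; apply: eq_bigr => i _.
  by rewrite -exprM mulnC.
have q0 : q = 0.
  apply/eqP; apply: contraT => nq.
  have := max_poly_roots nq (rs := [seq (j.+1)%:R | j <- iota 0 (size q)]).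
  rewrite size_map size_iota ltnn; apply.
    apply/allP => x /mapP [j _ ->]; rewrite /root qE hp //.
    by move=> i; apply: expf_neq0; apply: natr_nz.
  rewrite map_inj_uniq ?iota_uniq //.
  by move=> i j /natr_inj_k [].
have cq (m : 'X_{1..n < B}) : p@_m = 0.
  have := congr1 (fun q : {poly k} => q`_(e m)) q0.
  rewrite /= coef0 /q coef_sum (bigD1 m) //= coefZ coefXn eqxx mulr1 big1 ?addr0 //.
  move=> m' nm'; rewrite coefZ coefXn.
  case: eqP => [h|]; last by rewrite mulr0.
  case/eqP: nm'; apply/val_inj/mnmP; apply: (kron_inj (B := B)).
  - by move=> i; apply: leq_ltn_trans (mdeg_ge _ _) (bmdeg m').
  - by move=> i; apply: leq_ltn_trans (mdeg_ge _ _) (bmdeg m).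
  - by rewrite /e in h; rewrite -h.
by rewrite pE big1 // => m _; rewrite cq scale0r.
Qed.

Lemma mpoly_eval_eq0 n (p : {mpoly k[n]}) :
  (forall t : 'I_n -> k, p.@[t] = 0) -> p = 0.
Proof. by move=> h; apply: mpoly_torus_eq0 => t _. Qed.

Lemma mpoly_eval_eq n (p q : {mpoly k[n]}) :
  (forall t : 'I_n -> k, p.@[t] = q.@[t]) -> p = q.
Proof.
move=> h; apply/eqP; rewrite -subr_eq0; apply/eqP/mpoly_eval_eq0 => t.
by rewrite mevalB h subrr.
Qed.

Lemma mpoly_nz_point n (p : {mpoly k[n]}) : p != 0 -> exists t, p.@[t] != 0.
Proof.
move=> nz; apply: NNPP => hn; case/eqP: nz.
apply: mpoly_eval_eq0 => t; apply/eqP; apply: NNPP => h.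
by apply: hn; exists t; apply/negP.
Qed.
End Zero.
End P1.

Section S.
Variable k : fieldType.
Lemma hmap N n (v : 'I_N -> k) (Y : 'I_n -> {mpoly k[N]}) :
  map_mpoly (meval v) (\sum_(i < n) 'X_i * (Y i)%:MP_[n]) = \sum_i 'X_i * ((Y i).@[v])%:MP_[n].
Proof.
rewrite rmorph_sum; apply: eq_bigr => i _.
by rewrite rmorphM /= map_mpolyC map_mpolyX.
Qed.

Lemma polar_term n d (c : k) (m : 'X_{1..d}) (w : 'M[k]_(n,d)) (a : 'I_n -> k) :
 (map_mpoly (meval (fun x => mxvec w 0 x))
   (map_mpoly (@mpolyC (n * d) k) (c *: 'X_[m]) \mPo polar_subst k n d)).@[a]
 = (c *: 'X_[m]).@[fun j => \sum_i a i * w i j].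
Proof.
rewrite !map_mpolyZ /= map_mpolyX comp_mpolyZ comp_mpolyX map_mpolyZ /=.
rewrite !mevalZ mevalC mevalX rmorph_prod /= rmorph_prod /=.
congr (_ * _); apply: eq_bigr => j _.
rewrite !rmorphXn /=; congr (_ ^+ _).
rewrite tnth_mktuple hmap rmorph_sum; apply: eq_bigr => i _.
by rewrite /= rmorphM /= mevalC !mevalXU mxvecE.
Qed.

Lemma polar_eval n d (f : {mpoly k[d]}) (w : 'M[k]_(n,d)) (a : 'I_n -> k) :
 (map_mpoly (meval (fun x => mxvec w 0 x))
   (map_mpoly (fun c : k => c%:MP_[n * d]) f \mPo polar_subst k n d)).@[a]
 = f.@[fun j => \sum_i a i * w i j].
Proof.
change (fun c : k => c%:MP_[n * d]) with (@mpolyC (n*d) k).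
rewrite [in LHS](mpolyE f) [in RHS](mpolyE f).
rewrite (rmorph_sum (map_mpoly (@mpolyC (n*d) k))).
rewrite (raddf_sum (comp_mpoly (polar_subst k n d))).
rewrite (rmorph_sum (map_mpoly (meval (fun x => mxvec w 0 x)))).
rewrite !rmorph_sum.
apply: eq_bigr => m _; exact: polar_term.
Qed.
Variable hk : [pchar k] =i pred0.

Lemma pol_inv r n d (rho : ('I_r -> k) -> 'M[k]_d) f m :
  invariantV rho f -> Defs.invariant rho (@polarization k n d f m).
Proof.
move=> hf g hg w; rewrite /evalVn /polarization.
set Q := (_ \mPo _).
have e : map_mpoly (meval (fun x => mxvec (actVn rho g w) 0 x)) Q
       = map_mpoly (meval (fun x => mxvec w 0 x)) Q.
  apply: (mpoly_eval_eq hk) => a; rewrite /Q !polar_eval.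
  have := hf g hg (\col_j \sum_i a i * w i j).
  set L := (X in X = _ -> _); set R := (X in _ = X -> _) => hLR.
  transitivity L; last first.
    by rewrite hLR /R; apply: meval_eq => j; rewrite mxE.
  rewrite /L; apply: meval_eq => j; rewrite /actVn !mxE.
  have -> : \sum_i a i * (w *m (rho g)^T) i j = \sum_i \sum_l a i * (w i l * rho g j l).
    apply: eq_bigr => i _; rewrite mxE mulr_sumr; apply: eq_bigr => l _.
    by rewrite mxE.
  rewrite exchange_big /=; apply: eq_bigr => l _; rewrite mxE mulr_sumr.
  by apply: eq_bigr => i _; rewrite mulrA mulrC.
by have := congr1 (mcoeff m) e; rewrite !mcoeff_map_mpoly.
Qed.

Lemma pol_alg_inv r n d (rho : ('I_r -> k) -> 'M[k]_d) (h : {mpoly k[n * d]}) :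
  pol_alg rho h -> Defs.invariant rho h.
Proof.
move=> H; apply: H.
- by move=> G [f [m [hf ->]]]; exact: pol_inv.
- by move=> c g _ w; rewrite /evalVn !mevalC.
- by move=> G H hG hH g hg w; rewrite /evalVn !mevalD -!/(evalVn _ _) hG ?hH.
- by move=> G H hG hH g hg w; rewrite /evalVn !mevalM -!/(evalVn _ _) hG ?hH.
Qed.

Lemma scale_supp K (G : {mpoly k[K]}) (mu : 'I_K -> k) :
  (forall u, G.@[fun q => mu q * u q] = G.@[u]) ->
  forall c, c \in msupp G -> \prod_q mu q ^+ c q = 1.
Proof.
move=> h c hc.
pose G' := \sum_(c' <- msupp G) (G@_c' * \prod_q mu q ^+ c' q) *: 'X_[c'].
have e : G' = G.
  apply: (mpoly_eval_eq hk) => u; rewrite -h [in RHS]mevalE /G' rmorph_sum /=.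
  apply: eq_bigr => c' _; rewrite mevalZ mevalX -mulrA; congr (_ * _).
  by rewrite -big_split /=; apply: eq_bigr => q _; rewrite exprMn.
have := congr1 (mcoeff c) e; rewrite /G' raddf_sum (bigD1_seq c) ?msupp_uniq //=.
rewrite mcoeffZ mcoeffX eqxx mulr1 [X in _ + X]big1 ?addr0; last first.
  by move=> c' nc; rewrite mcoeffZ mcoeffX (negbTE nc) mulr0.
move/eqP; rewrite -{2}[G@_c]mulr1 -subr_eq0 -mulrBr mulf_eq0 subr_eq0.
by rewrite -[_ == 0]negbK mcoeff_eq0 hc /= => /eqP.
Qed.

Lemma diag r d (rho : ('I_r -> k) -> 'M[k]_d) : algebraic_torus_module rho ->
  exists K (E : 'I_K -> 'M[k]_d) (lam : 'I_K -> ('I_r -> k) -> k),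
  [/\ forall a b, E a *m E b = if a == b then E a else 0,
      \sum_q E q = 1%:M &
      forall t, in_torus t -> rho t = \sum_q lam q t *: E q].
Proof.
case=> h1 hmul [N [P hP]].
pose B := (\max_(ab : 'I_d * 'I_d) msize (P ab.1 ab.2))%N.
have hB a b : (msize (P a b) <= B)%N := @leq_bigmax _ (fun ab => msize (P ab.1 ab.2)) (a, b).
pose Mt := 'X_{1..r < B}.
pose D (t : 'I_r -> k) := \prod_i t i.
pose E (m : Mt) : 'M[k]_d := \matrix_(a, b) (P a b)@_m.
pose lam (m : Mt) (t : 'I_r -> k) := (\prod_i t i ^+ m i) / (D t) ^+ N.
have Dnz t : in_torus t -> D t != 0 by move=> ht; apply/prodf_neq0 => i _; apply: ht.
have rhoE t : in_torus t -> rho t = \sum_m lam m t *: E m.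
  move=> ht; apply/matrixP => a b; rewrite hP // summxE.
  rewrite {1}(mpolywE (hB a b)) rmorph_sum /= mulr_suml; apply: eq_bigr => m _.
  by rewrite mevalZ mevalX !mxE /lam [RHS]mulrC mulrA.
have lamM m s t : lam m (torus_mul s t) = lam m s * lam m t.
  rewrite /lam /D /torus_mul.
  under eq_bigr do rewrite exprMn.
  rewrite big_split /= big_split /= exprMn invfM /=.
  by rewrite mulrACA.
have lam1 m : lam m (@torus_one k r) = 1.
  rewrite /lam /D /torus_one (eq_bigr (fun _ => 1)) => [|i _]; last by rewrite expr1n.
  by rewrite big1_eq expr1n divr1.
have indep (X : Mt -> 'M[k]_d) : (forall t, in_torus t -> \sum_m lam m t *: X m = 0) ->
    forall m, X m = 0.
  move=> hX m0; apply/matrixP => a b; rewrite mxE.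
  pose p : {mpoly k[r]} := \sum_m (X m a b) *: 'X_[m].
  have p0 : p = 0.
    apply: (mpoly_torus_eq0 hk) => t ht.
    have := congr1 (fun M : 'M[k]_d => M a b * D t ^+ N) (hX t ht).
    rewrite /= mxE mul0r summxE mulr_suml => <-.
    rewrite /p rmorph_sum /=; apply: eq_bigr => m _; rewrite mevalZ mevalX !mxE /lam.
    by rewrite mulrAC divfK ?expf_neq0 ?Dnz // mulrC.
  have := congr1 (mcoeff (bmnm m0)) p0.
  rewrite /p raddf_sum (bigD1 m0) //= mcoeffZ mcoeffX eqxx mulr1.
  rewrite [X in _ + X]big1 ?addr0 ?mcoeff0 // => m nm.
  by rewrite mcoeffZ mcoeffX -bmeqP (negbTE nm) mulr0.
have tmul s t : in_torus s -> in_torus t -> in_torus (torus_mul s t).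
  by move=> hs ht i; rewrite /torus_mul mulf_neq0.
have orth a b : E a *m E b = if a == b then E a else 0.
  have step s : in_torus s -> lam b s *: E b = \sum_a lam a s *: (E a *m E b).
    move=> hs.
    pose X (b : Mt) := lam b s *: E b - \sum_a lam a s *: (E a *m E b).
    have hX : forall t, in_torus t -> \sum_b lam b t *: X b = 0.
      move=> t ht; rewrite /X.
      have e1 : \sum_b lam b t *: (lam b s *: E b) = rho (torus_mul s t).
        rewrite rhoE; last exact: tmul.
        by apply: eq_bigr => c _; rewrite scalerA lamM mulrC.
      have e2 : \sum_b lam b t *: (\sum_a lam a s *: (E a *m E b)) = rho s *m rho t.
        rewrite (rhoE s) // (rhoE t) // mulmx_suml.
        under eq_bigr do rewrite scaler_sumr.
        rewrite exchange_big /=; apply: eq_bigr => c _; rewrite mulmx_sumr.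
        apply: eq_bigr => c' _.
        by rewrite -scalemxAl -scalemxAr !scalerA mulrC.
      under eq_bigr do rewrite scalerBr.
      by rewrite sumrB e1 e2 hmul // subrr.
    by have /eqP := indep X hX b; rewrite subr_eq0 => /eqP.
  pose Y (a : Mt) := (if a == b then E b else 0) - E a *m E b.
  have hY : forall s, in_torus s -> \sum_a lam a s *: Y a = 0.
    move=> s hs; rewrite /Y; under eq_bigr do rewrite scalerBr.
    rewrite sumrB -step // (bigD1 b) //= eqxx big1 ?addr0 ?subrr // => c nc.
    by rewrite (negbTE nc) scaler0.
  have /eqP := indep Y hY a; rewrite /Y subr_eq0 => /eqP <-.
  by case: eqP => // ->.
have one_in : in_torus (@torus_one k r) by move=> i; rewrite /torus_one oner_neq0.
have sumE : \sum_m E m = 1%:M.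
  rewrite -h1 rhoE //; apply: eq_bigr => m _; by rewrite lam1 scale1r.
have reix (F : Mt -> 'M[k]_d) : \sum_m F m = \sum_(q < #|{: Mt}|) F (enum_val q).
  by rewrite -big_enum_val /=.
exists #|{: Mt}|, (fun q => E (enum_val q)), (fun q => lam (enum_val q)); split.
- by move=> a b /=; rewrite orth (inj_eq enum_val_inj).
- by rewrite -sumE reix.
- by move=> t ht; rewrite rhoE // reix.
Qed.

Section Back.
Variables (r d : nat) (rho : ('I_r -> k) -> 'M[k]_d).
Variables (K : nat) (E : 'I_K -> 'M[k]_d) (lam : 'I_K -> ('I_r -> k) -> k).
Hypothesis orth : forall a b, E a *m E b = if a == b then E a else 0.
Hypothesis sumE : \sum_q E q = 1%:M.
Hypothesis rhoE : forall t, in_torus t -> rho t = \sum_q lam q t *: E q.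

Lemma rhoEq t q : in_torus t -> rho t *m E q = lam q t *: E q.
Proof.
move=> ht; rewrite rhoE // mulmx_suml (bigD1 q) //= -scalemxAl orth eqxx.
rewrite big1 ?addr0 // => c nc; by rewrite -scalemxAl orth (negbTE nc) scaler0.
Qed.

Lemma Eqrho t q : in_torus t -> E q *m rho t = lam q t *: E q.
Proof.
move=> ht; rewrite rhoE // mulmx_sumr (bigD1 q) //= -scalemxAr orth eqxx.
rewrite big1 ?addr0 // => c nc; by rewrite -scalemxAr orth eq_sym (negbTE nc) scaler0.
Qed.

Lemma back n (w : 'M[k]_(n, d)) : polcone rho w -> nullcone rho w.
Proof.
move=> hpol F hF; apply/eqP; apply: contraT => hne.
pose Z q := w *m (E q)^T == 0.
pose Wf (u : 'I_K -> k) := \sum_q u q *: (w *m (E q)^T).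
pose G : {mpoly k[K]} :=
  F \mPo [tuple \sum_q (mxvec (w *m (E q)^T) 0 x) *: 'X_q | x < n * d].
have Geval u : G.@[u] = evalVn F (Wf u).
  rewrite comp_mpoly_meval /evalVn; apply: meval_eq => x.
  rewrite tnth_mktuple rmorph_sum /= /Wf linear_sum summxE; apply: eq_bigr => q _.
  by rewrite mevalZ mevalXU linearZ mxE mulrC.
have W1 : Wf (fun _ => 1) = w.
  rewrite /Wf; under eq_bigr do rewrite scale1r.
  by rewrite -mulmx_sumr -linear_sum sumE /= trmx1 mulmx1.
have W0 : Wf (fun _ => 0) = 0.
  by rewrite /Wf big1 // => q _; rewrite scale0r.
have Wact u t : in_torus t -> Wf u *m (rho t)^T = Wf (fun q => lam q t * u q).
  move=> ht; rewrite /Wf mulmx_suml; apply: eq_bigr => q _.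
  rewrite -scalemxAl -mulmxA -trmx_mul rhoEq // linearZ /= -scalemxAr scalerA.
  by rewrite mulrC.
pose mu2 q : k := if Z q then 2 else 1.
have Wsupp u : Wf (fun q => mu2 q * u q) = Wf u.
  apply: eq_bigr => q _; rewrite /mu2; case: ifP => hz.
    by rewrite (eqP hz) !scaler0.
  by rewrite mul1r.
have Ginv_lam t u : in_torus t -> G.@[fun q => lam q t * u q] = G.@[u].
  move=> ht; rewrite !Geval -Wact //; exact: (hF t ht (Wf u)).
have Ginv_2 u : G.@[fun q => mu2 q * u q] = G.@[u] by rewrite !Geval Wsupp.
have [c hc c0] : exists2 c, c \in msupp G & c != 0%MM.
  case: (boolP (has (fun c => c != 0%MM) (msupp G))) => [/hasP [c hc c0]|hn].
    by exists c.
  case/negP: hne; apply/eqP.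
  rewrite -{1}W1 -(Geval (fun _ => 1)) -[0 in RHS]W0 -(Geval (fun _ => 0)).
  rewrite !mevalE; apply: eq_big_seq => m hm.
  have /eqP -> : m == 0%MM by move/hasPn: hn => /(_ m hm); rewrite negbK.
  by rewrite !big1 // => i _; rewrite mnm0E expr0.
have hlam t : in_torus t -> \prod_q lam q t ^+ c q = 1.
  by move=> ht; exact: (@scale_supp K G (fun q => lam q t) (fun u => Ginv_lam t u ht) c hc).
have hZ q : Z q -> c q = 0%N.
  have h2 := @scale_supp K G mu2 Ginv_2 c hc.
  have e : \prod_q mu2 q ^+ c q = 2 ^+ (\sum_q (if Z q then c q else 0))%N.
    rewrite -prodrXr; apply: eq_bigr => q' _; rewrite /mu2.
    by case: (Z q') => //; rewrite expr1n expr0.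
  rewrite e -natrX in h2.
  have h3 : (2 ^ (\sum_q (if Z q then c q else 0)) = 1)%N.
    by apply: (natr_inj_k hk); rewrite /= h2.
  have h4 : (\sum_q (if Z q then c q else 0) = 0)%N.
    move: h3; case: (\sum_q _)%N => // s; rewrite expnS; lia.
  move=> hq; move: h4; rewrite (bigD1 q) //= hq; lia.
pose opt q := [pick ip : 'I_n * 'I_d | (w *m (E q)^T) ip.1 ip.2 != 0].
have opt_none q : opt q = None -> Z q.
  rewrite /opt; case: pickP => // hn _; apply/eqP/matrixP => i j.
  by move/negbT: (hn (i, j)); rewrite negbK => /eqP ->; rewrite mxE.
pose ell q : {mpoly k[n]} :=
  if opt q is Some ip then \sum_i (w *m (E q)^T) i ip.2 *: 'X_i else 1.
pose L q : {mpoly k[d]} :=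
  if opt q is Some ip then \sum_j (E q ip.2 j) *: 'X_j else 1.
pose h := \prod_q ell q ^+ c q.
pose f := \prod_q L q ^+ c q.
have ell_nz q : ell q != 0.
  rewrite /ell /opt; case: pickP => [ip hip|_]; last exact: oner_neq0.
  apply/eqP => h0; have := congr1 (mcoeff U_(ip.1)) h0.
  rewrite mcoeff0 raddf_sum (bigD1 ip.1) //= mcoeffZ mcoeffXU eqxx mulr1.
  rewrite [X in _ + X]big1 ?addr0; first by move/eqP; rewrite (negbTE hip).
  by move=> i ni; rewrite mcoeffZ mcoeffXU (negbTE ni) mulr0.
have h_nz : h != 0.
  by apply/prodf_neq0 => q _; apply: expf_neq0.
have [a ha] := mpoly_nz_point hk h_nz.
have f_eval : f.@[fun j => \sum_i a i * w i j] = h.@[a].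
  rewrite /f /h !rmorph_prod; apply: eq_bigr => q _; rewrite !rmorphXn; congr (_ ^+ _).
  rewrite /L /ell; case: (opt q) => [ip|]; last by rewrite !rmorph1.
  rewrite !rmorph_sum /=.
  rewrite (eq_bigr (fun j => \sum_i E q ip.2 j * (a i * w i j))); last first.
    by move=> j _; rewrite mevalZ mevalXU mulr_sumr.
  rewrite exchange_big /=; apply: eq_bigr => i _.
  rewrite mevalZ mevalXU mxE mulr_suml; apply: eq_bigr => j _; rewrite mxE.
  ring.
have [q0 cq0] : exists q0, c q0 != 0%N.
  apply: NNPP => hn; case/eqP: c0; apply/mnmP => q; rewrite mnm0E.
  by apply/eqP; apply: NNPP => hq; apply: hn; exists q; apply/negP.
have f0 : f.@[fun j => \sum_i a i * (0 : 'M[k]_(n, d)) i j] = 0.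
  rewrite (meval_eq (v2 := fun _ => 0)); last first.
    by move=> j; rewrite big1 // => i _; rewrite mxE mulr0.
  rewrite /f rmorph_prod (bigD1 q0) //= rmorphXn.
  have : ~~ Z q0 by apply/negP => /hZ; apply/eqP.
  rewrite /L; case E0 : (opt q0) => [ip|]; last by rewrite opt_none.
  move=> _; rewrite rmorph_sum big1 /= ?expr0n ?(negbTE cq0) ?mul0r //.
  by move=> j _; rewrite mevalZ mevalXU mulr0.
have f_inv : invariantV rho f.
  move=> g hg v; rewrite /f !rmorph_prod /=.
  transitivity (\prod_q (lam q g ^+ c q * (L q).@[fun x => v x 0] ^+ c q)); last first.
    rewrite big_split /= hlam // mul1r; apply: eq_bigr => q _; by rewrite rmorphXn.
  apply: eq_bigr => q _; rewrite /L; case E0 : (opt q) => [ip|]; last first.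
    by rewrite (hZ q (opt_none q E0)) !expr0 mulr1 rmorph1.
  rewrite !rmorphXn /= -exprMn; congr (_ ^+ _).
  rewrite !rmorph_sum /=.
  transitivity ((E q *m (rho g *m v)) ip.2 0).
    by rewrite mxE; apply: eq_bigr => j _; rewrite mevalZ mevalXU.
  rewrite mulmxA Eqrho // -scalemxAl !mxE; congr (_ * _); apply: eq_bigr => j _.
  by rewrite mevalZ mevalXU.
pose Q := map_mpoly (fun c : k => c%:MP_[n * d]) f \mPo polar_subst k n d.
have e : map_mpoly (meval (fun x => mxvec w 0 x)) Q
       = map_mpoly (meval (fun x => mxvec (0 : 'M[k]_(n, d)) 0 x)) Q.
  apply/mpolyP => m; rewrite !mcoeff_map_mpoly.
  apply: (hpol (polarization f m)) => A hS _ _ _; apply: hS.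
  by exists f, m.
have := congr1 (meval a) e; rewrite /Q !polar_eval f_eval f0.
by move/eqP; rewrite (negbTE ha).
Qed.
End Back.
End S.


Theorem theorem3p10 (k : closedFieldType) (char0 : [pchar k] =i pred0)
  (r d : nat) (rho : ('I_r -> k) -> 'M[k]_d) :
  algebraic_torus_module rho -> pol_ind_infinite rho.
Proof.
move=> hmod m; exists m; split => // w; split; first by move=> hn h hh; apply: hn; exact: (@pol_alg_inv k char0 r m d rho h hh).
have [K [E [lam [o s e]]]] := @diag k char0 r d rho hmod.
exact: (@back k char0 r d rho K E lam o s e m w).
Qed.
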